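(* Let $x\ne y$ be nodes in an ADMG $G$. There exist a node $z$ and a set $W$ such that $(\{z\},W)$ is a valid conditional instrumental set relative to $(x,y)$ in $G$ if and only if there exist a node $z'$ and a set $W'\subseteq\mathrm{an}_{\tilde G}(\{y,z'\})$ such that $(\{z'\},W')$ is a valid conditional instrumental set relative to $(x,y)$ in $G$.
   Context: An ADMG $G$ has a finite node set $V$, directed edges $u\to v$ and bidirected edges $u\leftrightarrow v$, with no directed cycle. A walk is a sequence of nodes $v_1,\dots,v_r$ with edges $e_i$ joining $v_i$ and $v_{i+1}$ (nodes may repeat). $\mathrm{de}_G(v)$ ($\mathrm{an}_G(v)$) is the set of nodes reachable from $v$ by a directed path (from which $v$ is reachable by a directed path), including $v$; for sets take unions. A non-endpoint occurrence on a walk is a collider if both incident walk edges have an arrowhead at it, otherwise a non-collider. A walk is open given $W$ if every collider is in $W$ and every non-collider is not in $W$. For disjoint $A,B,W$, $A\not\perp_G B\mid W$ if some walk from $A$ to $B$ is open given $W$, otherwise $A\perp_G B\mid W$. $\mathrm{causal}_G(x,y)=(\mathrm{de}_G(x)\cap\mathrm{an}_G(y))\setminus\{x\}$, $\mathrm{forb}_G(x,y)=\mathrm{de}_G(\mathrm{causal}_G(x,y))\cup\{x\}$, and $\tilde G$ is $G$ with all directed edges $x\to c$, $c\in\mathrm{causal}_G(x,y)$, removed. For pairwise disjoint $\{x,y\},Z,W$, $(Z,W)$ is a valid conditional instrumental set relative to $(x,y)$ in $G$ iff (a) $(Z\cup W)\cap\mathrm{forb}_G(x,y)=\emptyset$,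 (b) $x\not\perp_G Z\mid W$, and (c) $y\perp_{\tilde G} Z\mid W$. *)

(* Defs.v *)
From mathcomp Require Import all_boot.
Set Implicit Arguments. Unset Strict Implicit. Unset Printing Implicit Defensive.

Record mgraph (V : finType) := MG { dir : rel V; bid : rel V }.

Section ADMG.
Variable V : finType.

(* ADMG: no directed cycle (including no directed self-loop); bidirected
   edges are symmetric and have no self-loops. *)
Definition is_admg (G : mgraph V) : Prop :=
  [/\ forall u v, dir G u v -> ~~ connect (dir G) v u,
      symmetric (bid G) & irreflexive (bid G)].

(* The kind of edge used by one step of a walk from u to v:
   Fwd : u -> v,   Bwd : u <- v,   Bi : u <-> v. *)
Inductive ekind := Fwd | Bwd | Bi.

Definition edge_ok (G : mgraph V) (u v : V) (k : ekind) : bool :=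
  match k with
  | Fwd => dir G u v
  | Bwd => dir G v u
  | Bi  => bid G u v
  end.

(* arrowhead at the source / target of a step *)
Definition head_src (k : ekind) : bool := if k is Fwd then false else true.
Definition head_tgt (k : ekind) : bool := if k is Bwd then false else true.

(* A walk is a start node a together with a list of steps (v_{i+1}, e_i). *)
Fixpoint walk_ok (G : mgraph V) (u : V) (s : seq (V * ekind)) : bool :=
  if s is (v, k) :: s' then edge_ok G u v k && walk_ok G v s' else true.

(* u is a non-endpoint occurrence reached with arrowhead arr_in at u,
   remaining steps s (nonempty means u is not the last node). *)
Fixpoint open_from (W : {set V}) (arr_in : bool) (u : V)
    (s : seq (V * ekind)) : bool :=
  if s is (v, k) :: s' then
    (if arr_in && head_src k then u \in W else u \notin W)
    && open_from W (head_tgt k) v s'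
  else true.

Definition open_walk (W : {set V}) (a : V) (s : seq (V * ekind)) : bool :=
  if s is (v, k) :: s' then open_from W (head_tgt k) v s' else true.

Definition mconn (G : mgraph V) (A B W : {set V}) : Prop :=
  exists (a : V) (s : seq (V * ekind)),
    [/\ a \in A, walk_ok G a s, last a (unzip1 s) \in B & open_walk W a s].

Definition msep (G : mgraph V) (A B W : {set V}) : Prop := ~ mconn G A B W.

Definition de (G : mgraph V) (v : V) : {set V} := [set u | connect (dir G) v u].
Definition an (G : mgraph V) (v : V) : {set V} := [set u | connect (dir G) u v].
Definition de_set (G : mgraph V) (A : {set V}) : {set V} := \bigcup_(v in A) de G v.
Definition an_set (G : mgraph V) (A : {set V}) : {set V} := \bigcup_(v in A) an G v.

Definition causal (G : mgraph V) (x y : V) : {set V} := (de G x :&: an G y) :\ x.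
Definition forb (G : mgraph V) (x y : V) : {set V} := de_set G (causal G x y) :|: [set x].

Definition tildeG (G : mgraph V) (x y : V) : mgraph V :=
  MG (fun u v => dir G u v && ~~ ((u == x) && (v \in causal G x y))) (bid G).

(* (Z, W) is a valid conditional instrumental set relative to (x, y) in G;
   the standing pairwise-disjointness of {x,y}, Z, W is part of the notion. *)
Definition valid_cis (G : mgraph V) (x y : V) (Z W : {set V}) : Prop :=
  [/\ [&& [disjoint [set x; y] & Z], [disjoint [set x; y] & W]
         & [disjoint Z & W]],
      [disjoint (Z :|: W) & forb G x y],
      mconn G [set x] Z W &
      msep (tildeG G x y) [set y] Z W].
End ADMG.

(* Main.v *)
Require Import Defs.
From mathcomp Require Import all_boot.
Set Implicit Arguments. Unset Strict Implicit. Unset Printing Implicit Defensive.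

Lemma disjP (T : finType) (A B : {set T}) :
  reflect (forall u, u \in A -> u \in B -> False) [disjoint A & B].
Proof.
rewrite disjoints_subset; apply: (iffP subsetP) => H u.
  by move=> uA uB; move: (H u uA); rewrite inE uB.
by move=> uA; rewrite inE; apply/negP => uB; exact: H u uA uB.
Qed.

Fixpoint col_in (V : finType) (T : {set V}) (arr : bool) (u : V)
    (s : seq (V * ekind)) : bool :=
  if s is (v, k) :: s' then (arr && head_src k ==> (u \in T)) && col_in T (head_tgt k) v s'
  else true.

Fixpoint lastmark (V : Type) (arr : bool) (s : seq (V * ekind)) : bool :=
  if s is (_, k) :: s' then lastmark (head_tgt k) s' else arr.

Lemma walk_ok_cat (V : finType) (H : mgraph V) u s1 s2 :
  walk_ok H u (s1 ++ s2) = walk_ok H u s1 && walk_ok H (last u (unzip1 s1)) s2.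
Proof. by elim: s1 u => [|[v k] s1 IH] u //=; rewrite IH andbA. Qed.

Lemma open_from_cat (V : finType) (W : {set V}) arr u s1 s2 :
  open_from W arr u (s1 ++ s2) =
  open_from W arr u s1 && open_from W (lastmark arr s1) (last u (unzip1 s1)) s2.
Proof. by elim: s1 arr u => [|[v k] s1 IH] arr u //=; rewrite IH andbA. Qed.

Lemma open_col (V : finType) (W : {set V}) arr u s :
  open_from W arr u s -> col_in W arr u s.
Proof.
elim: s arr u => [|[v k] s IH] arr u //= /andP[h1 h2].
by rewrite IH // andbT; case: (arr && head_src k) h1.
Qed.

Lemma col_in_sub (V : finType) (T1 T2 : {set V}) arr u s :
  T1 \subset T2 -> col_in T1 arr u s -> col_in T2 arr u s.
Proof.
move=> /subsetP sT; elim: s arr u => [|[v k] s IH] arr u //= /andP[h1 h2].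
rewrite IH // andbT; case: (arr && head_src k) h1 => //=; exact: sT.
Qed.

Lemma open_change (V : finType) (W W' T : {set V}) arr u s :
  open_from W arr u s -> col_in T arr u s -> W :&: T \subset W' -> W' \subset W ->
  open_from W' arr u s.
Proof.
move=> + + /subsetP s1 /subsetP s2.
elim: s arr u => [|[v k] s IH] arr u //= /andP[h1 h2] /andP[c1 c2].
rewrite IH // andbT; case: (arr && head_src k) h1 c1 => /= h1 c1.
  by apply: s1; rewrite inE h1 c1.
by apply/negP => /s2; rewrite (negbTE h1).
Qed.

Lemma open_from_eq (V : finType) (W1 W2 : {set V}) arr u s :
  (forall n, n \in belast u (unzip1 s) -> (n \in W1) = (n \in W2)) ->
  open_from W1 arr u s = open_from W2 arr u s.
Proof.
elim: s arr u => [|[v k] s IH] arr u //= H.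
rewrite (H u (mem_head _ _)) IH // => n hn; apply: H; by rewrite inE hn orbT.
Qed.

Lemma walk_anc (V : finType) (H : mgraph V) (T : {set V}) arr u s :
  (forall a b, dir H a b -> b \in T -> a \in T) -> walk_ok H u s ->
  col_in T arr u s -> (lastmark arr s -> last u (unzip1 s) \in T) ->
  (~~ arr -> u \in T) -> (u \in T) /\ (forall n, n \in unzip1 s -> n \in T).
Proof.
move=> cl; elim: s arr u => [|[v k] s IH] arr u /=.
  by move=> _ _ h1 h2; split=> //; case: arr h1 h2 => [->|_ ->].
move=> /andP[e w] /andP[c1 c2] hl ha.
case: k e c1 c2 hl => /= e c1 c2 hl.
- have [vT rT] := IH true v w c2 hl ltac:(by []).
  split; first exact: cl e vT.
  by move=> n; rewrite inE => /orP[/eqP->|]; [exact: vT|exact: rT].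
- have uT : u \in T by case: arr c1 ha => /= [->|_ ->].
  have [vT rT] := IH false v w c2 hl (fun _ => cl _ _ e uT).
  split=> // n; rewrite inE => /orP[/eqP->|]; [exact: vT|exact: rT].
- have uT : u \in T by case: arr c1 ha => /= [->|_ ->].
  have [vT rT] := IH true v w c2 hl ltac:(by []).
  split=> // n; rewrite inE => /orP[/eqP->|]; [exact: vT|exact: rT].
Qed.

Lemma split_col (V : finType) (A : {set V}) arr u s :
  col_in A arr u s \/
  exists s1 v0 k0 s2, [/\ s = s1 ++ (v0, k0) :: s2, col_in A arr u s1,
     lastmark arr s1, head_src k0 & last u (unzip1 s1) \notin A].
Proof.
elim: s arr u => [|[v k] s IH] arr u /=; first by left.
case E: ((arr && head_src k) && (u \notin A)).
  move/andP: E => [/andP[a hk] uA]; right; exists [::], v, k, s; split=> //.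
have c1 : (arr && head_src k ==> (u \in A)).
  by move: E; case: (arr && head_src k) => //=; case: (u \in A).
case: (IH (head_tgt k) v) => [h|[s1 [v0 [k0 [s2 [-> h1 h2 h3 h4]]]]]].
  by left; rewrite c1 h.
by right; exists ((v, k) :: s1), v0, k0, s2; split=> //=; rewrite c1.
Qed.

Lemma last_occ (V : finType) (x a : V) (s : seq (V * ekind)) :
  exists s1 s2, [/\ s = s1 ++ s2, x \notin unzip1 s2 &
    (x \in a :: unzip1 s -> last a (unzip1 s1) = x)].
Proof.
elim: s a => [|[v k] s IH] a.
  by exists [::], [::]; split=> //; rewrite inE => /eqP.
have [s1 [s2 [-> h1 h2]]] := IH v.
case E: (x \in v :: unzip1 (s1 ++ s2)).
  by exists ((v, k) :: s1), s2; split=> //= _; rewrite h2.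
exists [::], ((v, k) :: s1 ++ s2); split=> //=; first by rewrite E.
by rewrite inE E orbF => /eqP.
Qed.

Lemma first_occ (V : finType) (c a : V) (s : seq (V * ekind)) :
  c \in a :: unzip1 s -> exists s1 s2, [/\ s = s1 ++ s2,
    last a (unzip1 s1) = c & c \notin belast a (unzip1 s1)].
Proof.
elim: s a => [|[v k] s IH] a.
  by rewrite inE => /eqP ->; exists [::], [::].
have [/eqP ->|ne] := boolP (a == c); first by exists [::], ((v,k) :: s).
rewrite inE eq_sym (negbTE ne) /= => /IH [s1 [s2 [-> h1 h2]]].
exists ((v, k) :: s1), s2; split=> //=.
by rewrite inE negb_or h2 andbT eq_sym.
Qed.

Lemma open_walk_prefix (V : finType) (W : {set V}) a s1 s2 :
  open_walk W a (s1 ++ s2) -> open_walk W a s1.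
Proof. by case: s1 => [|[v k] s1] //=; rewrite open_from_cat => /andP[]. Qed.

Lemma open_walk_suffix (V : finType) (W : {set V}) a s1 s2 :
  open_walk W a (s1 ++ s2) -> open_walk W (last a (unzip1 s1)) s2.
Proof.
case: s1 => [|[v k] s1] //=; rewrite open_from_cat => /andP[_].
by case: s2 => [|[v2 k2] s2] //= /andP[_].
Qed.

Lemma walk_tilde (V : finType) (G : mgraph V) (x y u : V) s :
  walk_ok G u s -> u != x -> x \notin unzip1 s -> walk_ok (tildeG G x y) u s.
Proof.
elim: s u => [|[v k] s IH] u //= /andP[e w] ux.
rewrite inE negb_or eq_sym => /andP[vx xs]; rewrite IH // andbT.
by case: k e => //= ->; rewrite ?(negbTE ux) ?(negbTE vx).
Qed.

Lemma anP (V : finType) (H : mgraph V) (A : {set V}) n :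
  reflect (exists2 v, v \in A & connect (dir H) n v) (n \in an_set H A).
Proof.
rewrite /an_set; apply: (iffP bigcupP) => [[v Hv]|[v Hv]].
  by rewrite /an inE => ?; exists v.
by move=> ?; exists v; rewrite // /an inE.
Qed.

Lemma an_closed (V : finType) (H : mgraph V) (A : {set V}) a b :
  dir H a b -> b \in an_set H A -> a \in an_set H A.
Proof.
move=> e /anP [v vA c]; apply/anP; exists v => //.
exact: connect_trans (connect1 e) c.
Qed.

Lemma tilde_conn (V : finType) (G : mgraph V) (x y a b : V) :
  connect (dir (tildeG G x y)) a b -> connect (dir G) a b.
Proof. by apply: connect_sub => u v /= /andP[e _]; exact: connect1. Qed.

Lemma acyc (V : finType) (G : mgraph V) a b :
  is_admg G -> connect (dir G) a b -> connect (dir G) b a -> a = b.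
Proof.
case=> ac _ _ /connectP [[|c p] /= Hp ->] // hb.
move/andP: Hp => [e Hp]; have := ac _ _ e; rewrite (connect_trans _ hb) //.
by apply/connectP; exists p.
Qed.
Lemma red_walk (V : finType) (G : mgraph V) (x y t : V) (W : {set V}) q :
  walk_ok (tildeG G x y) y q ->
  open_walk ((W :&: an_set (tildeG G x y) [set y; t]) :\ t) y q ->
  last y (unzip1 q) = t -> t \notin belast y (unzip1 q) -> open_walk W y q.
Proof.
case: q => [|[v k] s] //= hw Ho Hl Hb.
set T := an_set (tildeG G x y) [set y; t].
have tT : t \in T by apply/anP; exists t; rewrite ?inE ?eqxx ?orbT.
have yT : y \in T by apply/anP; exists y; rewrite ?inE ?eqxx.
have hc : col_in T false y ((v, k) :: s).
  rewrite /=; apply: col_in_sub (open_col Ho).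
  by apply/subsetP => n; rewrite !inE => /andP[_ /andP[_ ->]].
have [_ allT] := @walk_anc _ _ T false y ((v, k) :: s)
  (fun a b e h => an_closed e h) hw hc (fun _ => etrans (f_equal _ Hl) tT) (fun _ => yT).
rewrite -(open_from_eq (W1 := (W :&: T) :\ t)) // => n hn.
have nT : n \in T by apply: allT; move: (mem_belast hn).
have nt : n != t by apply: contraNneq Hb => <-; rewrite inE hn orbT.
by rewrite !inE nT nt andbT.
Qed.

Lemma cond_a (V : finType) (x y t : V) (W W' F : {set V}) :
  t \notin [set x; y] -> t \notin F -> W' \subset W -> t \notin W' ->
  [disjoint [set x; y] & W] -> [disjoint W & F] ->
  [&& [disjoint [set x; y] & [set t]], [disjoint [set x; y] & W'] & [disjoint [set t] & W']]
  /\ [disjoint ([set t] :|: W') & F].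
Proof.
move=> t1 t2 /subsetP sW t3 d1 /disjP d2; split; first (apply/and3P; split).
- by apply/disjP => u u1; rewrite inE => /eqP eu; move: t1; rewrite -eu u1.
- by apply: disjointWr d1; apply/subsetP.
- by apply/disjP => u; rewrite inE => /eqP ->; rewrite (negbTE t3).
- apply/disjP => u; rewrite !inE => /orP[/eqP ->|uW']; first by rewrite (negbTE t2).
  exact: d2 (sW _ uW').
Qed.

Theorem mainTheorem7 (V : finType) (G : mgraph V) (x y : V) :
  is_admg G -> x != y ->
  ((exists (z : V) (W : {set V}), valid_cis G x y [set z] W) <->
   (exists (z' : V) (W' : {set V}),
      W' \subset an_set (tildeG G x y) [set y; z'] /\
      valid_cis G x y [set z'] W')).
Proof.
move=> adm xy; split; last by case=> z' [W' [_ H]]; exists z', W'.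
case=> z [W [Hdis Hforb Hb Hc]].
set Gt := tildeG G x y.
move/and3P: Hdis => [dz dW dzW].
have dWF : [disjoint W & forb G x y] by apply: disjointWl Hforb; apply: subsetUr.
have zxy : z \notin [set x; y].
  by apply/negP => h; move/disjP: dz => dz; exact: dz _ h (set11 z).
have zx : z != x by move: zxy; rewrite !inE negb_or => /andP[].
have zW : z \notin W by apply/negP => h; move/disjP: dzW => d; exact: d _ (set11 z) h.
have zF : z \notin forb G x y.
  by apply/negP => h; move/disjP: Hforb => d; apply: d h; rewrite !inE eqxx.
have WP : forall c, c \in W -> [/\ c \notin [set x; y], c != x & c \notin forb G x y].
  move=> c cW; have c1 : c \notin [set x; y].
    by apply/negP => h; move/disjP: dW => d; exact: d _ h cW.
  split=> //; first by move: c1; rewrite !inE negb_or => /andP[].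
  by apply/negP => h; move/disjP: dWF => d; exact: d _ cW h.
case: Hb => a [p [Ha Hp Hl Ho]]; move: Ha; rewrite inE => /eqP Ha; subst a.
have [p0 [p2 [Ep xp2 Hl0]]] := last_occ x x p.
have lx : last x (unzip1 p0) = x by apply: Hl0; rewrite mem_head.
rewrite Ep in Hp Hl Ho.
have Hw2 : walk_ok G x p2 by move: Hp; rewrite walk_ok_cat lx => /andP[].
have Ho2 : open_walk W x p2 by rewrite -lx; exact: open_walk_suffix Ho.
have lz : last x (unzip1 p2) = z.
  by apply/set1P; move: Hl; rewrite /unzip1 map_cat last_cat lx.
clear Ep Hp Hl Ho Hl0 lx p0 p.
case: p2 xp2 Hw2 Ho2 lz => [|[v k] s] xp2 Hw2 Ho2 lz.
  by move: zx; rewrite -lz /= eqxx.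
set A := an Gt y.
have subW' : forall t, (W :&: an_set Gt [set y; t]) :\ t \subset W.
  by move=> t; apply/subsetP => n; rewrite !inE => /andP[_ /andP[]].
have subA : forall t, (W :&: an_set Gt [set y; t]) :\ t \subset an_set Gt [set y; t].
  by move=> t; apply/subsetP => n; rewrite !inE => /andP[_ /andP[_ ->]].
have tW' : forall t, t \notin (W :&: an_set Gt [set y; t]) :\ t.
  by move=> t; rewrite !inE eqxx.
have trunc : forall t q, walk_ok Gt y q ->
    open_walk ((W :&: an_set Gt [set y; t]) :\ t) y q ->
    last y (unzip1 q) \in [set t] ->
    exists q1, [/\ walk_ok Gt y q1, open_walk W y q1,
      open_walk ((W :&: an_set Gt [set y; t]) :\ t) y q1 &
      last y (unzip1 q1) = t].
  move=> t q Hq Hoq /set1P Hlq.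
  have := mem_last y (unzip1 q); rewrite Hlq => /first_occ [q1 [q2 [Eq l1 b1]]].
  rewrite Eq in Hq Hoq.
  have Hq1 : walk_ok Gt y q1 by move: Hq; rewrite walk_ok_cat => /andP[].
  have Ho1 := open_walk_prefix Hoq.
  by exists q1; split=> //; exact: red_walk Hq1 Ho1 l1 b1.
case: (split_col A (head_tgt k) v s) => [hA | [s1 [v0 [k0 [s2 [Es hA hm hk0 cA]]]]]].
- exists z, ((W :&: an_set Gt [set y; z]) :\ z); split; first exact: subA.
  have [a1 a2] := cond_a zxy zF (subW' z) (tW' z) dW dWF.
  split=> //.
  + exists x, ((v, k) :: s); split=> //; rewrite ?inE ?lz //=.
    apply: open_change Ho2 hA _ (subW' z); apply/subsetP => n.
    rewrite !inE => /andP[nW nA]; rewrite nW /=.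
    apply/andP; split; first by apply: contraNneq zW => <-.
    by apply/anP; exists y; rewrite ?inE ?eqxx.
  + move=> [a [q [Ha Hq Hlq Hoq]]]; move: Ha; rewrite inE => /eqP Ha; subst a.
    have [q1 [Hq1 Ho1 _ l1]] := trunc z q Hq Hoq Hlq.
    by apply: Hc; exists y, q1; split; rewrite ?inE ?l1.
- set c := last v (unzip1 s1).
  rewrite Es in Hw2 Ho2 lz xp2.
  move: Ho2; rewrite /= open_from_cat hm /= hk0 /= => /and3P[Ho1 cW Hor].
  move: Hw2; rewrite /= walk_ok_cat => /and3P[e Hw1 Hwr].
  have [cxy cx cF] := WP c cW.
  exists c, ((W :&: an_set Gt [set y; c]) :\ c); split; first exact: subA.
  have [a1 a2] := cond_a cxy cF (subW' c) (tW' c) dW dWF.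
  split=> //.
  + exists x, ((v, k) :: s1); split; rewrite ?inE //=; first by rewrite e.
    apply: open_change Ho1 hA _ (subW' c); apply/subsetP => n.
    rewrite !inE => /andP[nW nA]; rewrite nW /=.
    apply/andP; split; first by apply/eqP => E; move: nA; rewrite E => nA; apply: (negP cA); rewrite /A /an inE; exact: nA.
    by apply/anP; exists y; rewrite ?inE ?eqxx.
  + move=> [a [q [Ha Hq Hlq Hoq]]]; move: Ha; rewrite inE => /eqP Ha; subst a.
    have [q1 [Hq1 Ho1' Hoq1 l1]] := trunc c q Hq Hoq Hlq.
    case: q1 Hq1 Ho1' Hoq1 l1 => [|[v1 k1] s1q] Hq1 Ho1' Hoq1 l1.
      by move: cxy; rewrite -l1 /= !inE eqxx orbT.
    have xr : x \notin unzip1 ((v0, k0) :: s2).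
      apply: contra xp2 => /= h.
      by rewrite inE /unzip1 map_cat mem_cat /= h !orbT.
    case Hm: (lastmark (head_tgt k1) s1q).
    * apply: Hc; exists y, ((v1, k1) :: s1q ++ (v0, k0) :: s2); split.
      -- by rewrite inE.
      -- rewrite -cat_cons walk_ok_cat Hq1 l1 /=.
         exact: walk_tilde Hwr cx xr.
      -- rewrite -cat_cons /unzip1 map_cat last_cat l1 inE; apply/eqP.
         by move: lz; rewrite /= /unzip1 map_cat last_cat.
      -- rewrite /= open_from_cat Hm; apply/andP; split; first exact: Ho1'.
         by move: l1 => /= ->; rewrite /= hk0 cW Hor.
    * set W' := (W :&: an_set Gt [set y; c]) :\ c.
      set T' := an_set Gt ([set y] :|: W').
      have yT : y \in T' by apply/anP; exists y; rewrite ?inE ?eqxx.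
      have hc : col_in T' false y ((v1, k1) :: s1q).
        rewrite /=; apply: col_in_sub (open_col Hoq1).
        by apply/subsetP => n nW; apply/anP; exists n => //; apply/setU1P; right.
      have [_ allT] := @walk_anc _ _ T' false y ((v1, k1) :: s1q)
        (fun a b e h => an_closed e h) Hq1 hc ltac:(by rewrite /= Hm) (fun _ => yT).
      have cT : c \in T' by apply: allT; rewrite -l1 /= mem_last.
      case/anP: cT => w; rewrite !inE => /orP[/eqP ->|/andP[wc /andP[wW wT]]] cw.
        by move: cA; rewrite /A /an inE cw.
      case/anP: wT => u; rewrite !inE => /orP[/eqP->|/eqP->] wu.
        by move: cA; rewrite /A /an inE (connect_trans cw wu).
      have := acyc adm (tilde_conn cw) (tilde_conn wu).
      by move=> E; move: wc; rewrite E eqxx.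
Qed.
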